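(* Let $X$ be a real reflexive Banach space and let $f \in X^* \setminus \{0\}$. Put $G = \{x \in X : f(x) \le 0\}$. If $G$ is an existence set, then $\ker(f)$ is one-complemented in $X$.
   Context: For a non-empty set $F \subset X$ and $x \in X$, let $R_F(x) = \{ d \in F : \|d-c\| \le \|x-c\| \text{ for all } c \in F\}$. A non-empty set $F \subset X$ is an existence set if $R_F(x) \neq \emptyset$ for every $x \in X$. A closed linear subspace $V$ of $X$ is one-complemented if there exists a continuous linear projection of norm one from $X$ onto $V$. *)

(* Defs.v *)
From HB Require Import structures.
From mathcomp Require Import all_boot all_order all_algebra.
From mathcomp Require Import all_classical all_reals all_analysis.
Set Implicit Arguments. Unset Strict Implicit. Unset Printing Implicit Defensive.
Import Order.TTheory GRing.Theory Num.Theory.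
Import numFieldNormedType.Exports.
Local Open Scope classical_set_scope.
Local Open Scope ring_scope.

Section Defs.
Variables (R : realType) (X : normedModType R).

Definition lin_functional (f : X -> R) : Prop :=
  forall (a : R) (x y : X), f (a *: x + y) = a * f x + f y.

Definition lin_map (P : X -> X) : Prop :=
  forall (a : R) (x y : X), P (a *: x + y) = a *: P x + P y.

Definition in_dual (f : X -> R) : Prop := lin_functional f /\ continuous f.

Definition dual_bound (f : X -> R) (M : R) : Prop :=
  forall x : X, `|f x| <= M * `|x|.

(* Reflexivity: the canonical embedding J : X -> X^** is surjective, i.e.
   every bounded linear functional Phi on X^* (operator norm) is evaluation
   at some point of X. *)
Definition reflexive_space : Prop :=
  forall Phi : (X -> R) -> R,
    (forall (a : R) (f g : X -> R), in_dual f -> in_dual g ->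
        Phi (fun x => a * f x + g x) = a * Phi f + Phi g) ->
    (exists C : R, forall (f : X -> R) (M : R), in_dual f -> 0 <= M ->
        dual_bound f M -> `|Phi f| <= C * M) ->
    exists x0 : X, forall f : X -> R, in_dual f -> Phi f = f x0.

Definition best_set (F : set X) (x : X) : set X :=
  [set d | F d /\ forall c, F c -> `|d - c| <= `|x - c|].

Definition existence_set (F : set X) : Prop :=
  F !=set0 /\ forall x : X, best_set F x !=set0.

Definition one_complemented (V : set X) : Prop :=
  exists P : X -> X,
    [/\ lin_map P, continuous P,
        (forall x, V (P x)), (forall v, V v -> P v = v)
      & (forall x, `|P x| <= `|x|)].

End Defs.

(* Main.v *)
Require Import Defs.
From HB Require Import structures.
From mathcomp Require Import all_boot all_order all_algebra.
From mathcomp Require Import all_classical all_reals all_analysis.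
Import Order.TTheory GRing.Theory Num.Theory.
Import numFieldNormedType.Exports.
Local Open Scope classical_set_scope.
Local Open Scope ring_scope.

Theorem theorem8 (R : realType) (X : completeNormedModType R) (f : X -> R) :
  reflexive_space X ->
  in_dual f -> (exists x : X, f x != 0) ->
  existence_set [set x : X | f x <= 0] ->
  one_complemented [set x : X | f x = 0].
Proof.
move=> _ [flin fcont] [x2 fx2] [_ ex].
have f0 : f 0 = 0.
  have h := flin 1 0 0; rewrite scale1r addr0 mul1r in h.
  by apply: (addrI (f 0)); rewrite addr0 -h.
have fZ : forall a x, f (a *: x) = a * f x.
  by move=> a x; have := flin a x 0; rewrite addr0 f0 addr0.
have fD : forall x y, f (x + y) = f x + f y.
  by move=> x y; have := flin 1 x y; rewrite scale1r mul1r.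
have fN : forall x, f (- x) = - f x.
  by move=> x; rewrite -scaleN1r fZ mulN1r.
have fB : forall x y, f (x - y) = f x - f y.
  by move=> x y; rewrite fD fN.
have [x1 fx1] : exists x1, 0 < f x1.
  case: (ltrgtP (f x2) 0) => h; last by rewrite h eqxx in fx2.
  - by exists (- x2); rewrite fN oppr_gt0.
  - by exists x2.
have [d [Gd bd]] := ex x1.
move: Gd => /= Gd.
set z := x1 - d.
have fz : 0 < f z by rewrite /z fB subr_gt0 (le_lt_trans Gd fx1).
have key : forall y (s : R), f y = 0 -> 0 < s -> `|y| <= `|s *: z + y|.
  move=> y s fy s0.
  have := bd (d - s^-1 *: y).
  rewrite /= fB fZ fy mulr0 subr0 => /(_ Gd).
  have e1 : d - (d - s^-1 *: y) = s^-1 *: y by rewrite opprB addrC subrK.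
  have e2 : x1 - (d - s^-1 *: y) = z + s^-1 *: y by rewrite /z opprB addrA addrAC.
  rewrite e1 e2 => h.
  have e : forall v : X, s * `|v| = `|s *: v| by move=> v; rewrite normrZ gtr0_norm.
  by move: h; rewrite -(ler_pM2l s0) !e scalerDr scalerA divff ?gt_eqF // scale1r.
set w := (f z)^-1 *: z.
have fw : f w = 1 by rewrite /w fZ mulVf ?gt_eqF.
rewrite /one_complemented; exists (fun x : X => x - f x *: w : X); split.
- move=> a x y; rewrite flin scalerDl -scalerA scalerBr.
  by rewrite opprD addrACA.
- move=> x; apply: cvgB; first exact: cvg_id.
  by apply: cvgZr_tmp; apply: fcont.
- by move=> x /=; rewrite fB fZ fw mulr1 subrr.
- by move=> v /= ->; rewrite scale0r subr0.
- move=> x.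
  have fy : f (x - f x *: w) = 0 by rewrite fB fZ fw mulr1 subrr.
  case: (ltrgtP (f x) 0) => h.
  + have := key (- (x - f x *: w)) (- (f x / f z)).
    rewrite fN fy oppr0 oppr_gt0 pmulr_llt0 ?invr_gt0 // => /(_ erefl h).
    have e3 : - (f x / f z) *: z - (x - f x *: w) = - x.
      by rewrite /w scalerA scaleNr opprB addrA addNr add0r.
    by rewrite e3 !normrN.
  + have := key (x - f x *: w) (f x / f z) fy.
    rewrite divr_gt0 // => /(_ erefl).
    by rewrite -scalerA -/w addrCA subrr addr0.
  + by rewrite h scale0r subr0.
Qed.
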